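(* Let $z,w>0$ be such that $\mathrm{DAG}(z,w)<\infty$, and let $G$ be a random labelled DAG drawn from the Boltzmann model with parameters $(z,w)$. Let $N_1,N_2,\dots$ be the sizes of the successive layers $V_1,V_2,\dots$ of the root-layering of $G$ (with $N_i=0$ if the root-layering has fewer than $i$ layers). Then for every $k\ge 1$, all positive integers $n_1,\dots,n_k$ for which the conditioning event has positive probability, and every integer $n_{k+1}\ge 0$, \[\mathbb P_{z,w}[N_{k+1}=n_{k+1}\mid N_1=n_1,\dots,N_k=n_k]=\mathbb P_{z,w}[N_2=n_{k+1}\mid N_1=n_k].\] That is, the sequence of layer sizes is a time-homogeneous Markov chain.
   Context: A labelled DAG with $n$ vertices is a directed acyclic graph on vertex set $\{1,\dots,n\}$ ($n\ge0$). For a DAG $G$ write $v(G)$, $e(G)$, $s(G)$ for its numbers of vertices, edges and sources (vertices of in-degree $0$). The graphic generating function of DAGs is $\mathrm{DAG}(z,w,u)=\sum_G \frac{z^{v(G)}w^{e(G)}u^{s(G)}}{(1+w)^{\binom{v(G)}{2}}v(G)!}$, the sum over all labelled DAGs, and $\mathrm{DAG}(z,w)=\mathrm{DAG}(z,w,1)$. The Boltzmann model with parameters $(z,w)$ is the probability distribution $\mathbb P_{z,w}[G]=\frac{z^{v(G)}w^{e(G)}}{(1+w)^{\binom{v(G)}{2}}v(G)!\,\mathrm{DAG}(z,w)}$ on labelled DAGs. The root-layering of a DAG $G=(V,E)$ is the ordered partition $(V_1,\dots,V_k)$ of $V$ where $V_i$ is the set of sources of the graph obtained from $G$ by deleting $V_1\cup\dots\cup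 V_{i-1}$. *)

(* Defs.v *)
From HB Require Import structures.
From mathcomp Require Import all_boot all_order all_algebra.
From mathcomp Require Import all_classical all_reals all_analysis.
Set Implicit Arguments. Unset Strict Implicit. Unset Printing Implicit Defensive.
Import Order.TTheory GRing.Theory Num.Theory numFieldNormedType.Exports.
Local Open Scope ring_scope.

(* A labelled digraph on n vertices: vertex set 'I_n (i.e. {0,..,n-1},
   playing the role of {1,..,n}), edge set E; (x,y) \in E is the edge x -> y. *)
Definition edge_rel n (E : {set 'I_n * 'I_n}) : rel 'I_n := fun x y => (x, y) \in E.

Definition isDAG n (E : {set 'I_n * 'I_n}) : bool :=
  [forall x, forall y, ((x, y) \in E) ==> ~~ connect (edge_rel E) y x].

Definition sources_in n (E : {set 'I_n * 'I_n}) (S : {set 'I_n}) : {set 'I_n} :=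
  [set v in S | [forall u in S, (u, v) \notin E]].

Fixpoint remaining n (E : {set 'I_n * 'I_n}) (k : nat) : {set 'I_n} :=
  match k with
  | 0 => [set: 'I_n]%SET
  | k'.+1 => remaining E k' :\: sources_in E (remaining E k')
  end.

(* i-th layer V_i (i >= 1) of the root-layering; empty if fewer than i layers *)
Definition layer n (E : {set 'I_n * 'I_n}) (i : nat) : {set 'I_n} :=
  sources_in E (remaining E i.-1).

Definition layer_size n (E : {set 'I_n * 'I_n}) (i : nat) : nat := #|layer E i|.

Definition bweight (R : realType) (z w : R) n (E : {set 'I_n * 'I_n}) : R :=
  z ^+ n * w ^+ #|E| / ((1 + w) ^+ 'C(n, 2) * (n`!)%:R).

Definition event := forall n, {set 'I_n * 'I_n} -> bool.

Definition mass (R : realType) (z w : R) (P : event) (n : nat) : R :=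
  \sum_(E : {set 'I_n * 'I_n} | isDAG E && P n E) bweight z w E.

Definition DAGgf (R : realType) (z w : R) : R :=
  limn (series (mass z w (fun _ _ => true))).

Definition bprob (R : realType) (z w : R) (P : event) : R :=
  limn (series (mass z w P)) / DAGgf z w.

Definition bcond (R : realType) (z w : R) (A B : event) : R :=
  bprob z w (fun n E => A n E && B n E) / bprob z w B.

(* Main.v *)
Require Import Defs.
From HB Require Import structures.
From mathcomp Require Import all_boot all_order all_algebra.
From mathcomp Require Import all_classical all_reals all_analysis.
From mathcomp Require Import ring lra zify.
Import Order.TTheory GRing.Theory Num.Theory numFieldNormedType.Exports.
Local Open Scope ring_scope.


Section Sums.
Variables (R : realType) (w : R).

Lemma prod_constT (X : finType) (c : R) : \prod_(x : X) c = c ^+ #|X|.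
Proof. by rewrite -prodr_const. Qed.

Lemma prod_if (X : finType) (A : {set X}) (c : R) :
  \prod_(x : X) (if x \in A then c else 1) = c ^+ #|A|.
Proof. by rewrite -big_mkcond prodr_const. Qed.

Lemma powsum (X : finType) : \sum_(A : {set X}) w ^+ #|A| = (1 + w) ^+ #|X|.
Proof.
rewrite -prod_constT.
have -> : \prod_(x : X) (1 + w) = \prod_(x : X) \sum_(bb : bool) (if bb then w else 1).
  by apply: eq_bigr => x _; rewrite big_bool addrC.
rewrite bigA_distr_bigA /=.
rewrite (reindex (fun A : {set X} => [ffun x => x \in A])); last first.
  apply: onW_bij; exists (fun f : {ffun X -> bool} => [set x | f x]).
    by move=> A; apply/setP => x; rewrite inE ffunE.
  by move=> f; apply/ffunP => x; rewrite ffunE inE.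
by apply: eq_bigr => A _; rewrite -prod_if; apply: eq_bigr => x _; rewrite ffunE.
Qed.

Lemma powsum1 (X : finType) :
  \sum_(A : {set X} | A != finset.set0) w ^+ #|A| = (1 + w) ^+ #|X| - 1.
Proof.
by rewrite -powsum [in RHS](bigD1 finset.set0) //= cards0 expr0 [1 + _]addrC addrK.
Qed.

Lemma colsum (X Y : finType) (Q : pred Y) :
  \sum_(C : {set X * Y} | [forall j, Q j || [exists i, (i, j) \in C]]) w ^+ #|C| =
  \prod_(j : Y) (if Q j then (1 + w) ^+ #|X| else (1 + w) ^+ #|X| - 1).
Proof.
have -> : \prod_(j : Y) (if Q j then (1 + w) ^+ #|X| else (1 + w) ^+ #|X| - 1) =
   \prod_(j : Y) \sum_(A : {set X} | Q j || (A != finset.set0)) w ^+ #|A|.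
  apply: eq_bigr => j _; case: (Q j) => /=; first by rewrite powsum.
  by rewrite powsum1.
rewrite bigA_distr_big_dep /=.
rewrite (reindex (fun g : {ffun Y -> {set X}} => [set p : X * Y | p.1 \in g p.2])); last first.
  apply: onW_bij; exists (fun C : {set X * Y} => [ffun j => [set i | (i, j) \in C]]).
    move=> g; apply/ffunP => j; apply/setP => i; by rewrite ffunE !finset.in_set.
  by move=> C; apply/setP => -[i j]; rewrite !finset.in_set ffunE finset.in_set.
apply: eq_big => g.
  have fm : forall (A : {set X}) j,
    (A \in (fun A0 : {set X} => Q j || (A0 != finset.set0))) = Q j || (A != finset.set0) by [].
  apply/forallP/familyP => h j; move: (h j); rewrite fm.
    case: (Q j) => //= /existsP [i]; rewrite finset.in_set => hi.
    by apply/set0Pn; exists i.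
  case: (Q j) => //= /set0Pn [i hi]; apply/existsP; exists i; by rewrite finset.in_set.
move=> _; rewrite -prod_if.
rewrite (eq_bigr (fun p : X * Y => (fun i j => if i \in g j then w else 1) p.1 p.2));
  last by move=> [i j] _; rewrite finset.in_set.
rewrite -(pair_bigA _ (fun (i : X) (j : Y) => if i \in g j then w else 1)) /=.
rewrite exchange_big /=.
by apply: eq_bigr => j _; rewrite prod_if.
Qed.

End Sums.

Lemma conn_fwd (T T' : finType) (e : rel T) (e' : rel T') (f : T' -> T) :
  (forall x y, e (f x) (f y) = e' x y) -> (forall x v, e (f x) v -> exists y, v = f y) ->
  forall x v, connect e (f x) v -> exists2 y, v = f y & connect e' x y.
Proof.
move=> hee hcl x v /connectP [p]; elim: p x => [|v1 p IH] x /=.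
  by move=> _ ->; exists x.
case/andP=> e1 hp hv; have [y1 ey] := hcl _ _ e1; subst v1.
have [y hy c] := IH y1 hp hv; exists y => //.
by apply: connect_trans (connect1 _) c; rewrite -hee.
Qed.

Lemma conn_bwd (T T' : finType) (e : rel T) (e' : rel T') (f : T' -> T) :
  (forall x y, e (f x) (f y) = e' x y) ->
  forall x y, connect e' x y -> connect e (f x) (f y).
Proof.
move=> hee x y /connectP [p hp ->]; elim: p x hp => [|y1 p IH] x /=.
  by rewrite connect0.
by case/andP=> e1 hp; apply: connect_trans (connect1 _) (IH _ hp); rewrite hee.
Qed.

Lemma in_src n (E : {set 'I_n * 'I_n}) v :
  (v \in sources_in E [set: _]%SET) = [forall u, (u, v) \notin E].
Proof.
rewrite /sources_in inE /=.
have hT : forall u : 'I_n, u \in [set: _]%SET by move=> u; rewrite inE.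
rewrite hT /=; apply/forallP/forallP => h u.
  by move: (h u); rewrite hT.
by rewrite hT implyTb h.
Qed.


Definition Hsum (R : realType) (w : R) (a b : nat) (psi : (nat -> nat) -> bool) : R :=
  \sum_(H : {set 'I_b * 'I_b} | isDAG H && psi (fun i => layer_size H i.+1))
     w ^+ #|H| * \prod_(j : 'I_b) (if j \in sources_in H [set: _]%SET
                                   then (1 + w) ^+ a - 1 else (1 + w) ^+ a).
Arguments Hsum {R}.

Section Decomp.
Variables (n a b : nat) (S : {set 'I_n}) (L : 'I_a -> 'I_n) (Rr : 'I_b -> 'I_n).
Hypotheses (Linj : injective L) (Rinj : injective Rr) (LS : forall i, L i \in S)
  (RS : forall j, Rr j \notin S) (SL : forall v, v \in S -> exists i, v = L i)
  (SR : forall v, v \notin S -> exists j, v = Rr j).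
Implicit Types (E : {set 'I_n * 'I_n}) (H : {set 'I_b * 'I_b}) (C : {set 'I_a * 'I_b}).

Lemma LneR i j : L i != Rr j.
Proof. by apply/eqP => e; move: (LS i); rewrite e (negbTE (RS j)). Qed.

Lemma LorR v : (exists i, v = L i) \/ (exists j, v = Rr j).
Proof. by case: (boolP (v \in S)) => h; [left; apply: SL | right; apply: SR]. Qed.

Definition restr (E : {set 'I_n * 'I_n}) : {set 'I_b * 'I_b} :=
  [set p | (Rr p.1, Rr p.2) \in E].
Definition cross (E : {set 'I_n * 'I_n}) : {set 'I_a * 'I_b} :=
  [set p | (L p.1, Rr p.2) \in E].
Definition fRR (p : 'I_b * 'I_b) := (Rr p.1, Rr p.2).
Definition fLR (p : 'I_a * 'I_b) := (L p.1, Rr p.2).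
Definition glue (H : {set 'I_b * 'I_b}) (C : {set 'I_a * 'I_b}) :=
  fRR @: H :|: fLR @: C.

Lemma fRR_inj : injective fRR.
Proof. by move=> [x y] [x' y'] [/Rinj -> /Rinj ->]. Qed.
Lemma fLR_inj : injective fLR.
Proof. by move=> [x y] [x' y'] [/Linj -> /Rinj ->]. Qed.

Lemma in_glueRR H C x y : ((Rr x, Rr y) \in glue H C) = ((x, y) \in H).
Proof.
rewrite inE; apply/orP/idP => [[]|h]; last by left; apply/imsetP; exists (x, y).
  by case/imsetP => -[q1 q2] qH [/Rinj -> /Rinj ->].
by case/imsetP => -[q1 q2] qH [e _]; move: (LneR q1 x); rewrite e eqxx.
Qed.

Lemma in_glueLR H C i y : ((L i, Rr y) \in glue H C) = ((i, y) \in C).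
Proof.
rewrite inE; apply/orP/idP => [[]|h]; last by right; apply/imsetP; exists (i, y).
  by case/imsetP => -[q1 q2] qH [e _]; move: (LneR i q1); rewrite e eqxx.
by case/imsetP => -[q1 q2] qH [/Linj -> /Rinj ->].
Qed.

Lemma in_glueL H C x i : ((x, L i) \in glue H C) = false.
Proof.
rewrite inE; apply/negbTE; apply/orP => -[] /imsetP [[q1 q2] _ [_ e]];
  by move: (LneR i q2); rewrite e eqxx.
Qed.

Lemma restr_glue H C : restr (glue H C) = H.
Proof. by apply/setP => -[x y]; rewrite inE in_glueRR. Qed.
Lemma cross_glue H C : cross (glue H C) = C.
Proof. by apply/setP => -[x y]; rewrite inE in_glueLR. Qed.

Lemma glue_restr E : (forall x i, (x, L i) \notin E) -> glue (restr E) (cross E) = E.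
Proof.
move=> h; apply/setP => -[u v].
case: (LorR v) => [[i ->]|[j ->]]; first by rewrite in_glueL (negbTE (h _ _)).
by case: (LorR u) => [[i ->]|[j' ->]]; rewrite ?in_glueLR ?in_glueRR inE.
Qed.

Lemma card_glue H C : #|glue H C| = (#|H| + #|C|)%N.
Proof.
rewrite cardsU !card_imset ?subn0; [|exact: fLR_inj|exact: fRR_inj].
have -> : fRR @: H :&: fLR @: C = finset.set0; last by rewrite cards0 subn0.
apply/setP => p; rewrite !inE; apply/negbTE/andP => -[/imsetP [q _ ->] /imsetP [q' _ e]].
by case: e => e _; move: (LneR q'.1 q.1); rewrite e eqxx.
Qed.

Lemma srcS E : (sources_in E [set: _]%SET == S) =
  [forall i, forall x, (x, L i) \notin E] && [forall j, exists x, (x, Rr j) \in E].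
Proof.
apply/eqP/andP.
  move=> hE; split.
    apply/forallP => i; have : L i \in sources_in E [set: _]%SET by rewrite hE LS.
    by rewrite in_src.
  apply/forallP => j; have : Rr j \notin sources_in E [set: _]%SET by rewrite hE RS.
  rewrite in_src negb_forall => /existsP [x]; rewrite negbK => hx.
  by apply/existsP; exists x.
case=> /forallP h1 /forallP h2; apply/setP => v; rewrite in_src.
case: (LorR v) => [[i ->]|[j ->]]; first by rewrite LS (h1 i).
rewrite (negbTE (RS j)); apply/negbTE; rewrite negb_forall.
by case/existsP: (h2 j) => x hx; apply/existsP; exists x; rewrite negbK.
Qed.

Definition colcond (H : {set 'I_b * 'I_b}) (C : {set 'I_a * 'I_b}) :=
  [forall j, [exists j', (j', j) \in H] || [exists i, (i, j) \in C]].

Lemma src_glue H C : (sources_in (glue H C) [set: _]%SET == S) = colcond H C.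
Proof.
rewrite srcS.
have -> : [forall i, forall x, (x, L i) \notin glue H C].
  by apply/forallP => i; apply/forallP => x; rewrite in_glueL.
rewrite andTb; apply: eq_forallb => j.
apply/existsP/orP => [[x]|[/existsP [j' h]|/existsP [i h]]].
- by case: (LorR x) => [[i ->]|[j' ->]]; rewrite ?in_glueLR ?in_glueRR => h;
    [right|left]; apply/existsP; eexists; exact: h.
- by exists (Rr j'); rewrite in_glueRR.
- by exists (L i); rewrite in_glueLR.
Qed.

Lemma dag_glue H C : isDAG (glue H C) = isDAG H.
Proof.
set e := edge_rel (glue H C).
have hee : forall x y, e (Rr x) (Rr y) = edge_rel H x y.
  by move=> x y; rewrite /e /edge_rel in_glueRR.
have hcl : forall x v, e (Rr x) v -> exists y, v = Rr y.
  move=> x v; case: (LorR v) => [[i ->]|[j ->]]; last by exists j.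
  by rewrite /e /edge_rel in_glueL.
have conn : forall x y, connect e (Rr x) (Rr y) = connect (edge_rel H) x y.
  move=> x y; apply/idP/idP; last exact: conn_bwd.
  by case/(@conn_fwd _ _ _ _ _ hee hcl) => y' /Rinj ->.
have connL : forall x i, connect e (Rr x) (L i) = false.
  move=> x i; apply/negbTE/negP; case/(@conn_fwd _ _ _ _ _ hee hcl) => y' e1 _.
  by move: (LneR i y'); rewrite e1 eqxx.
apply/forallP/forallP => h x.
  apply/forallP => y; apply/implyP => hxy.
  by have := implyP (forallP (h (Rr x)) (Rr y)); rewrite in_glueRR conn; apply.
apply/forallP => v; apply/implyP.
case: (LorR v) => [[i ->]|[j ->]]; first by rewrite in_glueL.
case: (LorR x) => [[i ->]|[j' ->]]; first by rewrite connL.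
by rewrite in_glueRR conn => hj; exact: (implyP (forallP (h j') j) hj).
Qed.

Lemma LnotinR i (Y : {set 'I_b}) : (L i \in Rr @: Y) = false.
Proof.
by apply/negbTE/negP => /imsetP [j _ e]; move: (LneR i j); rewrite e eqxx.
Qed.

Lemma sources_img E (X : {set 'I_b}) : sources_in E (Rr @: X) = Rr @: sources_in (restr E) X.
Proof.
apply/setP => v; case: (LorR v) => [[i ->]|[j ->]].
  by rewrite LnotinR inE LnotinR.
rewrite mem_imset // !inE mem_imset //; congr (_ && _).
apply/forallP/forallP => h u.
  by apply/implyP => uX; have := implyP (h (Rr u)); rewrite mem_imset // inE; apply.
apply/implyP => /imsetP [u' u'X ->]; have := implyP (h u'); rewrite inE; exact.
Qed.

Lemma imsetD_R (A B : {set 'I_b}) : Rr @: (A :\: B) = Rr @: A :\: Rr @: B.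
Proof.
apply/setP => v; case: (LorR v) => [[i ->]|[j ->]]; last by rewrite finset.in_setD !mem_imset // finset.in_setD.
by rewrite inE !LnotinR.
Qed.

Lemma rem_img E : sources_in E [set: _]%SET = S ->
  forall i, remaining E i.+1 = Rr @: remaining (restr E) i.
Proof.
move=> hS; elim=> [|i IH].
  rewrite /= hS; apply/setP => v; case: (LorR v) => [[i ->]|[j ->]].
    by rewrite !inE LS /= LnotinR.
  by rewrite finset.in_setD RS mem_imset // !inE.
change (remaining E i.+1 :\: sources_in E (remaining E i.+1) =
  Rr @: (remaining (restr E) i :\: sources_in (restr E) (remaining (restr E) i))).
by rewrite IH sources_img imsetD_R.
Qed.

Lemma layer_restr E : sources_in E [set: _]%SET = S ->
  forall i, layer_size E i.+2 = layer_size (restr E) i.+1.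
Proof.
move=> hS i; change (#|sources_in E (remaining E i.+1)| =
  #|sources_in (restr E) (remaining (restr E) i)|).
by rewrite rem_img // sources_img card_imset.
Qed.

Lemma prod_src (R : realType) (w : R) H :
  \prod_(j : 'I_b) (if j \in sources_in H [set: _]%SET then (1 + w) ^+ a - 1 else (1 + w) ^+ a)
  = \sum_(C | colcond H C) w ^+ #|C|.
Proof.
rewrite /colcond colsum card_ord; apply: eq_bigr => j _.
by rewrite in_src -negb_exists; case: [exists _, _].
Qed.

Lemma decomp_sum (R : realType) (w : R) psi :
  \sum_(E : {set 'I_n * 'I_n} | isDAG E && (sources_in E [set: _]%SET == S)
        && psi (fun i => layer_size E i.+2)) w ^+ #|E| = Hsum w a b psi.
Proof.
transitivity (\sum_(E : {set 'I_n * 'I_n} | isDAG E && (sources_in E [set: _]%SET == S)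
        && psi (fun i => layer_size (restr E) i.+1)) w ^+ #|E|).
  apply: eq_bigl => E; case hS: (sources_in E _ == S); rewrite ?andbF ?andFb //.
  rewrite !andbT; congr (_ && psi _); apply: funext => i.
  by rewrite layer_restr //; apply/eqP.
rewrite (reindex_onto (fun HC : {set 'I_b * 'I_b} * {set 'I_a * 'I_b} => glue HC.1 HC.2)
   (fun E => (restr E, cross E))) /=; last first.
  move=> E /andP [/andP [_ hS] _]; apply: glue_restr; move: hS; rewrite srcS.
  by case/andP => /forallP h _ x i; exact: (forallP (h i) x).
rewrite /Hsum.
transitivity (\sum_(H : {set 'I_b * 'I_b} | isDAG H && psi (fun i => layer_size H i.+1))
   \sum_(C | colcond H C) w ^+ #|H| * w ^+ #|C|); last first.
  by apply: eq_bigr => H _; rewrite prod_src big_distrr.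
rewrite pair_big_dep.
apply: eq_big => -[H C] /=.
  by rewrite restr_glue cross_glue eqxx andbT dag_glue src_glue andbAC.
by move=> _; rewrite card_glue exprD.
Qed.

End Decomp.


Lemma bin2D (m k : nat) : ('C(m + k, 2) = 'C(m, 2) + 'C(k, 2) + m * k)%N.
Proof.
elim: k => [|k IH]; first by rewrite bin0n muln0 !addn0.
rewrite addnS !binS !bin1 IH mulnS; lia.
Qed.

Lemma decomp_S (R : realType) (w : R) n (S : {set 'I_n}) psi :
  \sum_(E : {set 'I_n * 'I_n} | isDAG E && (sources_in E [set: _]%SET == S)
        && psi (fun i => layer_size E i.+2)) w ^+ #|E| = Hsum w #|S| #|~: S| psi.
Proof.
apply: (@decomp_sum n #|S| #|~: S| S (@enum_val _ S) (@enum_val _ (~: S))).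
- exact: enum_val_inj.
- exact: enum_val_inj.
- by move=> i; exact: enum_valP.
- by move=> j; have := enum_valP j; rewrite finset.in_setC.
- by move=> v vS; exists (enum_rank_in vS v); rewrite enum_rankK_in.
- move=> v vS; rewrite -finset.in_setC in vS.
  by exists (enum_rank_in vS v); rewrite enum_rankK_in.
Qed.

Definition massu (R : realType) (z w u : R) (P : event) (n : nat) : R :=
  \sum_(E : {set 'I_n * 'I_n} | isDAG E && P n E)
     bweight z w E * u ^+ #|sources_in E [set: _]%SET|.
Definition ev (psi : (nat -> nat) -> bool) : event :=
  fun n E => psi (fun i => layer_size E i.+1).
Definition Kf (R : realType) (z w u : R) n1 :=
  z ^+ n1 * u ^+ n1 / ((1 + w) ^+ 'C(n1, 2) * (n1`!)%:R).
Definition up (R : realType) (w : R) n1 := 1 - ((1 + w) ^+ n1)^-1.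
Arguments massu {R}. Arguments Kf {R}. Arguments up {R}.

Lemma massu_eq (R : realType) (z w u : R) P m :
  massu z w u P m = z ^+ m / ((1 + w) ^+ 'C(m, 2) * (m`!)%:R) *
    \sum_(E : {set 'I_m * 'I_m} | isDAG E && P m E)
       w ^+ #|E| * u ^+ #|sources_in E [set: _]%SET|.
Proof.
rewrite /massu mulr_sumr; apply: eq_bigr => E _; rewrite /bweight.
ring.
Qed.

Lemma Hsum_eq (R : realType) (w : R) (hw : 0 < w) a b psi :
  Hsum w a b psi = (1 + w) ^+ (a * b) *
    \sum_(H : {set 'I_b * 'I_b} | isDAG H && psi (fun i => layer_size H i.+1))
       w ^+ #|H| * up w a ^+ #|sources_in H [set: _]%SET|.
Proof.
rewrite /Hsum mulr_sumr; apply: eq_bigr => H _.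
have hne : (1 + w) ^+ a != 0 by rewrite expf_neq0 // lt0r_neq0 // ltr_wpDr // ltW.
rewrite (eq_bigr (fun j => (1 + w) ^+ a * (if j \in sources_in H [set: _]%SET then up w a else 1))); last first.
  move=> j _; case: ifP => _; last by rewrite mulr1.
  by rewrite /up mulrBr mulr1 mulfV.
rewrite big_split /= prod_constT prod_if card_ord -exprM.
by rewrite mulrCA.
Qed.

Lemma step (R : realType) (z w u : R) (hw : 0 < w) n1 h psi :
  massu z w u (ev (fun s => (s 0%N == n1) && psi (fun i => s i.+1))) (n1 + h) =
  Kf z w u n1 * massu z w (up w n1) (ev psi) h.
Proof.
set n := (n1 + h)%N.
rewrite [in RHS]massu_eq /massu /ev /=.
rewrite (partition_big (fun E => sources_in E [set: _]%SET) (fun S => #|S| == n1)); last first.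
  by move=> E /andP [_ /andP [h1 _]].
transitivity (\sum_(S : {set 'I_n} | #|S| == n1)
   (z ^+ n / ((1 + w) ^+ 'C(n, 2) * (n`!)%:R) * u ^+ n1) * Hsum w n1 h psi).
  apply: eq_bigr => S hS.
  rewrite (eq_bigl (fun E => isDAG E && (sources_in E [set: _]%SET == S)
        && psi (fun i => layer_size E i.+2))); last first.
    move=> E; case e: (sources_in E _ == S); rewrite ?andbF ?andbT //.
    have -> : layer_size E 1 = #|S| by rewrite -(eqP e).
    by rewrite hS.
  have hSc : #|~: S| = h.
    by apply/eqP; rewrite -(eqn_add2l n1) -{1}(eqP hS) cardsC card_ord.
  rewrite -(eqP hS) -hSc -decomp_S mulr_sumr /=.
  apply: eq_bigr => E /andP [/andP [_ /eqP e] _]; rewrite e /bweight.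
  ring.
rewrite (eq_bigl (fun S => S \in [set S : {set 'I_n} | #|S| == n1])); last first.
  by move=> S; rewrite finset.in_set.
rewrite sumr_const card_draws card_ord Hsum_eq //.
set X := \sum_(H | _) _.
rewrite /Kf /n -mulr_natr.
have hbin := bin_fact (leq_addr h n1).
rewrite addKn in hbin.
rewrite -hbin bin2D !exprD !natrM.
have h1 : (1 + w) != 0 by rewrite lt0r_neq0 // ltr_wpDr // ltW.
have hf1 : (n1`!)%:R != 0 :> R by rewrite pnatr_eq0 -lt0n fact_gt0.
have hf2 : (h`!)%:R != 0 :> R by rewrite pnatr_eq0 -lt0n fact_gt0.
have hc : ('C(n1 + h, n1))%:R != 0 :> R by rewrite pnatr_eq0 -lt0n bin_gt0 leq_addr.
field.
by rewrite ?hf1 ?hf2 ?hc ?expf_neq0.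
Qed.


Lemma sershift (R : realType) (a b : nat -> R) n1 K :
  (forall n, (n < n1)%N -> a n = 0) -> (forall h, a (n1 + h)%N = K * b h) ->
  cvgn (series b) -> limn (series a) = K * limn (series b).
Proof.
move=> h0 hs hb.
have z0 : forall m, (m <= n1)%N -> series a m = 0.
  elim=> [|m IH] hm; first by rewrite /series /= big_geq.
  by rewrite seriesSr IH ?h0 ?addr0 // ltnW.
have e : forall N, series a (N + n1)%N = K * series b N.
  elim=> [|N IH]; first by rewrite add0n z0 // /series /= big_geq // mulr0.
  by rewrite addSn !seriesSr IH addnC hs mulrDr.
have : (series a @ \oo --> K * limn (series b))%classic.
  rewrite -(cvg_shiftn n1).
  have -> : (fun n => series a (n + n1)%N) = (fun n => K * series b n).
    by apply: funext => N; exact: e.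
  exact: cvgMl_tmp.
by move/cvg_lim => -> .
Qed.

Section Bounds.
Variables (R : realType) (z w : R) (hz : 0 < z) (hw : 0 < w).

Lemma bweight_ge0 n (E : {set 'I_n * 'I_n}) : 0 <= bweight z w E.
Proof.
have h1 : 0 <= 1 + w by rewrite addr_ge0 // ltW.
apply: divr_ge0; first by apply: mulr_ge0; apply: exprn_ge0; exact: ltW.
by apply: mulr_ge0; [exact: exprn_ge0 | exact: ler0n].
Qed.

Lemma massu_ge0 u P n : 0 <= u -> 0 <= massu z w u P n.
Proof.
by move=> hu; apply: sumr_ge0 => E _; rewrite mulr_ge0 ?exprn_ge0 ?bweight_ge0.
Qed.

Lemma massu_le u P n : 0 <= u -> u <= 1 -> massu z w u P n <= mass z w (fun _ _ => true) n.
Proof.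
move=> hu0 hu1; rewrite /massu /mass big_mkcondr /= [X in _ <= X]big_mkcondr /=.
apply: ler_sum => E _; case: (P n E) => //; last exact: bweight_ge0.
by rewrite ler_piMr ?bweight_ge0 // exprn_ile1.
Qed.

Lemma massu_cvg u P : cvgn (series (mass z w (fun _ _ => true))) -> 0 <= u -> u <= 1 ->
  cvgn (series (massu z w u P)).
Proof.
move=> hf hu0 hu1; apply: (series_le_cvg _ _ _ hf).
- by move=> n; exact: massu_ge0.
- by move=> n; rewrite /mass; apply: sumr_ge0 => E _; exact: bweight_ge0.
- by move=> n; exact: massu_le.
Qed.

Lemma up_bounds n1 : 0 <= up w n1 /\ up w n1 <= 1.
Proof.
have h1 : 1 <= (1 + w) ^+ n1 by rewrite exprn_ege1 // lerDl ltW.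
have h0 : 0 < (1 + w) ^+ n1 by apply: lt_le_trans h1.
split; rewrite /up.
  by rewrite subr_ge0 invf_le1.
by rewrite lerBlDr lerDl invr_ge0 ltW.
Qed.

Lemma up_gt0 n1 : (0 < n1)%N -> 0 < up w n1.
Proof.
move=> hn; have h1 : 1 < (1 + w) ^+ n1.
  by rewrite exprn_egt1 ?ltrDl // -lt0n.
have h0 : 0 < (1 + w) ^+ n1 by apply: lt_trans h1.
by rewrite /up subr_gt0 invf_lt1.
Qed.

Lemma Kf_gt0 u n1 : 0 < u -> 0 < Kf z w u n1.
Proof.
move=> hu; rewrite /Kf divr_gt0 ?mulr_gt0 ?exprn_gt0 // ?ltr0n ?fact_gt0 //.
by rewrite addr_gt0.
Qed.

End Bounds.


Fixpoint chain (l : seq nat) (psi : (nat -> nat) -> bool) : (nat -> nat) -> bool :=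
  if l is n1 :: l' then fun s => (s 0%N == n1) && chain l' psi (fun i => s i.+1) else psi.
Fixpoint Kc (R : realType) (z w u : R) (l : seq nat) : R :=
  if l is n1 :: l' then Kf z w u n1 * Kc R z w (up w n1) l' else 1.
Fixpoint ul (R : realType) (w u : R) (l : seq nat) : R :=
  if l is n1 :: l' then ul R w (up w n1) l' else u.
Arguments Kc {R}. Arguments ul {R}.

Lemma chainser (R : realType) (z w : R) (hz : 0 < z) (hw : 0 < w)
  (hf : cvgn (series (mass z w (fun _ _ => true)))) l psi :
  forall u, 0 <= u -> u <= 1 ->
  limn (series (massu z w u (ev (chain l psi)))) =
  Kc z w u l * limn (series (massu z w (ul w u l) (ev psi))).
Proof.
elim: l => [|n1 l IH] u hu0 hu1 /=; first by rewrite mul1r.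
have [hp0 hp1] := @up_bounds R w hw n1.
rewrite (@sershift _ _ (massu z w (up w n1) (ev (chain l psi))) n1 (Kf z w u n1)).
- by rewrite IH // mulrA.
- move=> n hn; rewrite /massu big_pred0 // => E; rewrite /ev /=.
  apply/negbTE/andP => -[_ /andP [/eqP e _]].
  have := max_card (mem (layer E 1)); rewrite card_ord.
  by rewrite -/(layer_size E 1) e => /(leq_trans hn); rewrite ltnn.
- by move=> h; exact: step.
- exact: massu_cvg.
Qed.

Lemma chain_iota (f : nat -> nat) psi k : forall j s,
  chain (map f (iota j k)) psi s =
  all (fun i => s i == f (j + i)%N) (iota 0 k) && psi (fun i => s (i + k)%N).
Proof.
elim: k => [|k IH] j s /=.
  by congr psi; apply: funext => i; rewrite addn0.
rewrite IH addn0 -andbA; congr (_ && (_ && _)).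
  have -> : iota 1 k = map (addn 1) (iota 0 k) by rewrite -iotaDl.
  rewrite all_map; apply: eq_all => i /=.
  by rewrite add1n addSnnS.
by congr psi; apply: funext => i; rewrite addnS.
Qed.

Lemma forall_all k (P : nat -> bool) : [forall i : 'I_k, P i] = all P (iota 0 k).
Proof.
apply/forallP/allP => h i.
  by move=> hi; rewrite mem_iota add0n in hi; exact: (h (Ordinal hi)).
by apply: h; rewrite mem_iota /= ltn_ord.
Qed.

Lemma ul_rcons (R : realType) (w : R) l x : forall u, ul w u (rcons l x) = up w x.
Proof. by elim: l => [|y l IH] u //=. Qed.

Lemma Kc_gt0 (R : realType) (z w : R) (hz : 0 < z) (hw : 0 < w) l :
  all (fun x => 0 < x)%N l -> forall u, 0 < u -> 0 < Kc z w u l.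
Proof.
elim: l => [|y l IH] //= /andP [hy hl] u hu.
by rewrite mulr_gt0 ?Kf_gt0 // IH // up_gt0.
Qed.

Lemma mass_massu (R : realType) (z w : R) P : mass z w P = massu z w 1 P.
Proof.
by apply: funext => n; apply: eq_bigr => E _; rewrite expr1n mulr1.
Qed.

Lemma bprob_ext (R : realType) (z w : R) (P Q : event) :
  (forall n E, P n E = Q n E) -> bprob z w P = bprob z w Q.
Proof.
move=> h; rewrite /bprob.
have -> : mass z w P = mass z w Q.
  by apply: funext => n; apply: eq_bigl => E; rewrite h.
by [].
Qed.

Lemma div_cancel (R : realType) (c x y d : R) : c != 0 ->
  (c * x / d) / (c * y / d) = (x / d) / (y / d).
Proof.
move=> hc; rewrite -(mulrA c x) -(mulrA c y).
by rewrite invfM mulrACA mulfV // mul1r.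
Qed.


Theorem lemma1 (R : realType) (z w : R) (hz : 0 < z) (hw : 0 < w)
  (hfin : cvgn (series (mass z w (fun _ _ => true))))
  (k : nat) (hk : (1 <= k)%N) (ns : nat -> nat)
  (hpos : forall i, (1 <= i <= k)%N -> (0 < ns i)%N)
  (hcond : 0 < bprob z w (fun n E => [forall i : 'I_k, layer_size E i.+1 == ns i.+1]))
  (m : nat) :
  bcond z w (fun n E => layer_size E k.+1 == m)
            (fun n E => [forall i : 'I_k, layer_size E i.+1 == ns i.+1])
  = bcond z w (fun n E => layer_size E 2 == m) (fun n E => layer_size E 1 == ns k).
Proof.
set lk := map (fun i => ns i.+1) (iota 0 k).
have evA : forall n (E : {set 'I_n * 'I_n}),
    (layer_size E k.+1 == m) && [forall i : 'I_k, layer_size E i.+1 == ns i.+1] =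
    ev (chain lk (fun s => s 0%N == m)) n E.
  by move=> n E; rewrite /ev chain_iota (forall_all k (fun i => layer_size E i.+1 == ns i.+1)) andbC.
have evB : forall n (E : {set 'I_n * 'I_n}),
    [forall i : 'I_k, layer_size E i.+1 == ns i.+1] =
    ev (chain lk (fun _ => true)) n E.
  by move=> n E; rewrite /ev chain_iota (forall_all k (fun i => layer_size E i.+1 == ns i.+1)) andbT.
have evC : forall n (E : {set 'I_n * 'I_n}),
    (layer_size E 2 == m) && (layer_size E 1 == ns k) =
    ev (chain [:: ns k] (fun s => s 0%N == m)) n E.
  by move=> n E; rewrite /ev /= andbC.
have evD : forall n (E : {set 'I_n * 'I_n}),
    (layer_size E 1 == ns k) = ev (chain [:: ns k] (fun _ => true)) n E.
  by move=> n E; rewrite /ev /= andbT.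
rewrite /bcond (@bprob_ext _ z w _ _ evA) (@bprob_ext _ z w _ _ evB) (@bprob_ext _ z w _ _ evC) (@bprob_ext _ z w _ _ evD).
rewrite /bprob !mass_massu !chainser // ?ler01 //.
have [k' ek] : exists k', k = k'.+1 by exists k.-1; rewrite prednK.
have hul : ul w 1 lk = up w (ns k).
  by rewrite /lk ek -addn1 iotaD map_cat cats1 ul_rcons add0n addn1.
rewrite hul /= mulr1 !div_cancel //.
  by rewrite lt0r_neq0 // Kf_gt0.
rewrite lt0r_neq0 // Kc_gt0 //.
rewrite /lk all_map; apply/allP => i; rewrite mem_iota add0n /= => hi.
by apply: hpos; rewrite ltn0Sn.
Qed.
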